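(* Let $p>2$ be an odd prime and $q=p^\ell$ with $\ell\geq 1$. Let $\widetilde{\mathbb{F}}$ be a field of characteristic $p$ and $f:\mathbb{F}_q\to\widetilde{\mathbb{F}}$ an SD-map. Then $f(\mathbb{F}_q)$ is the unique subfield of $\widetilde{\mathbb{F}}$ of order $q$ (in particular, such a subfield exists).
   Context: $\mathbb{F}_q$ is the finite field with $q$ elements. A map $f:\mathbb{F}\to\widetilde{\mathbb{F}}$ between fields is called an SD-map if for all $x\neq y$ in $\mathbb{F}$ one has $f(x)\neq f(y)$ and \[ f\left(\frac{x+y}{x-y}\right)=\frac{f(x)+f(y)}{f(x)-f(y)}. \] *)

(* Defs.v *)
From mathcomp Require Import all_boot all_algebra all_field.
Set Implicit Arguments. Unset Strict Implicit. Unset Printing Implicit Defensive.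
Import GRing.Theory.
Local Open Scope ring_scope.

Definition SD_map (F G : fieldType) (f : F -> G) : Prop :=
  forall x y : F, x != y ->
    f x != f y /\ f ((x + y) / (x - y)) = (f x + f y) / (f x - f y).

(* Main.v *)
Require Import Defs.
From mathcomp Require Import all_boot all_algebra all_field.
From mathcomp Require Import ring.
Import GRing.Theory.
Local Open Scope ring_scope.

Lemma frobB (K : fieldType) (p n : nat) (a b : K) :
  prime p -> p \in [pchar K] -> (a - b) ^+ (p ^ n) = a ^+ (p ^ n) - b ^+ (p ^ n).
Proof.
move=> pp pK.
have hn : [pchar K].-nat (p ^ n)%N.
  by rewrite pnatX (pnatE _ pp) pK.
have := exprDn_pchar (a - b) b hn.
rewrite subrK => ->. by rewrite addrK.
Qed.

Lemma prod_mull (K : fieldType) (r : K) (s : seq K) :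
  \prod_(y <- s) (r * y) = r ^+ size s * \prod_(y <- s) y.
Proof.
elim: s => [|y s IH]; first by rewrite !big_nil mulr1.
rewrite !big_cons IH /= exprS. ring.
Qed.

Lemma closed_fix (K : fieldType) (s : seq K) :
  uniq s -> GRing.divring_closed (mem s) -> forall r, r \in s -> r ^+ size s = r.
Proof.
move=> us [s1 sB sD] r rs.
have s0 : (0 : K) \in s by rewrite -(subrr 1); apply: sB.
have sV : forall v, v \in s -> v^-1 \in s.
  by move=> v vs; rewrite -[v^-1]mul1r; apply: sD.
have sM : forall u v, u \in s -> v \in s -> u * v \in s.
  by move=> u v us' vs; rewrite -[v]invrK; apply: sD => //; apply: sV.
have sz : (0 < size s)%N by case: s rs {us s1 sB sD s0 sV sM}.
have [->|r0] := eqVneq r 0; first by rewrite expr0n eqn0Ngt sz.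
set s' := rem 0 s.
have us' : uniq s' by apply: rem_uniq.
have ms' : forall y, (y \in s') = (y != 0) && (y \in s).
  by move=> y; rewrite (mem_rem_uniq _ us) inE.
have um : uniq (map (GRing.mul r) s') by rewrite (map_inj_uniq (mulfI r0)).
have sub : {subset map (GRing.mul r) s' <= s'}.
  move=> z /mapP [y ys ->]; move: ys; rewrite !ms' => /andP [y0 ys].
  by rewrite mulf_neq0 //= sM.
have [_ eqm] := uniq_min_size um sub (eq_leq (esym (size_map _ _))).
have pe : perm_eq (map (GRing.mul r) s') s' by apply: uniq_perm.
have : \prod_(y <- map (GRing.mul r) s') y = \prod_(y <- s') y by apply: perm_big.
rewrite big_map prod_mull.
have pn0 : \prod_(y <- s') y != 0.
  by rewrite prodf_seq_neq0; apply/allP => y; rewrite ms' => /andP [].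
rewrite -{2}[\prod_(y <- s') y]mul1r => /(mulIf pn0) e.
have -> : size s = (size s').+1 by rewrite size_rem // prednK.
by rewrite exprS e mulr1.
Qed.

Theorem lemma3p1 (p l : nat) (F : finFieldType) (K : fieldType) (f : F -> K) :
  prime p -> (2 < p)%N -> (1 <= l)%N -> #|F| = (p ^ l)%N ->
  p \in [pchar K] -> SD_map f ->
  [/\ GRing.divring_closed (mem (codom f)),
      uniq (codom f),
      size (codom f) = (p ^ l)%N &
      forall s : seq K, uniq s -> size s = (p ^ l)%N ->
        GRing.divring_closed (mem s) -> s =i codom f].
Proof.
move=> pp p2 l1 cardF pK SD.
have K2 : (2 : K) != 0.
  apply/negP => /eqP e2.
  have c2 : (2%N \in [pchar K]) by rewrite inE /= e2 eqxx.
  move: c2; rewrite (pcharf_eq pK) inE => /eqP e.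
  by move: p2; rewrite -e.
have inj : injective f.
  move=> x y e; apply/eqP/negP => /negP nxy.
  by move: (SD x y nxy) => [/negP ne _]; apply: ne; rewrite e.
have q3 : (2 < p ^ l)%N.
  case: l l1 {cardF} => // l _; rewrite expnS.
  apply: (leq_trans p2); apply: leq_pmulr; by rewrite expn_gt0 prime_gt0.
have [a a0 a1] : exists2 a : F, a != 0 & a != 1.
  case: (boolP [exists a : F, (a != 0) && (a != 1)]) => [/existsP [a /andP[]] | /existsPn H].
    by move=> *; exists a.
  exfalso.
  have : (#|F| <= #|[:: (0%R:F); 1%R]|)%N.
    apply/subset_leq_card/subsetP => x _; move: (H x).
    by rewrite negb_and !negbK !inE.
  move=> h; have := leq_trans h (card_size _); rewrite cardF /=.
  by rewrite leqNgt q3.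
have SD0 : forall x, x != 0 -> f 1 * (f x - f 0) = f x + f 0.
  move=> x x0; have [ne e] := SD x 0 x0.
  move: e; rewrite addr0 subr0 divff // => ->.
  by rewrite divfK // subr_eq0.
have f1 : f 1 = 1.
  have e1 := SD0 a a0; have e2 := SD0 1 (oner_neq0 _).
  have : (f 1 - 1) * (f a - f 1) = 0.
    have -> : (f 1 - 1) * (f a - f 1) = f 1 * (f a - f 0) - f 1 * (f 1 - f 0) - ((f a + f 0) - (f 1 + f 0)) by ring.
    by rewrite e1 e2 subrr.
  move/eqP; rewrite mulf_eq0 !subr_eq0 => /orP [/eqP //|/eqP e].
  by move/inj: e => e; move: a1; rewrite e eqxx.
have f0 : f 0 = 0.
  have := SD0 1 (oner_neq0 _); rewrite f1 mul1r => e.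
  have : 2 * f 0 = 0.
    have -> : 2 * f 0 = (1 + f 0) - (1 - f 0) by ring.
    by rewrite e subrr.
  by move/eqP; rewrite mulf_eq0 (negbTE K2) /= => /eqP.
have fT : forall z, z != 1 -> f ((z + 1) / (z - 1)) = (f z + 1) / (f z - 1).
  by move=> z z1; have [_ e] := SD z 1 z1; rewrite e f1.
have Tinj : forall u v : K, u != 1 -> v != 1 -> (u + 1) / (u - 1) = (v + 1) / (v - 1) -> u = v.
  move=> u v u1 v1 /eqP; rewrite eqr_div ?subr_eq0 // => /eqP e.
  have : 2 * (v - u) = 0.
    have -> : 2 * (v - u) = (u + 1) * (v - 1) - (v + 1) * (u - 1) by ring.
    by rewrite e subrr.
  by move/eqP; rewrite mulf_eq0 (negbTE K2) subr_eq0 /= => /eqP.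
have fnz : forall x, x != 0 -> f x != 0.
  by move=> x x0; rewrite -f0; apply/negP => /eqP /inj /eqP; apply/negP.
have fdiv : forall x y, f (x / y) = f x / f y.
  move=> x y.
  have [-> | y0] := eqVneq y 0; first by rewrite invr0 !mulr0 f0 invr0 mulr0.
  have [-> | xy] := eqVneq x y.
    by rewrite !divff // fnz.
  have xy1 : x / y != 1.
    by apply/negP => /eqP e; move: xy; rewrite -(divfK y0 x) e mul1r eqxx.
  have [ne e] := SD x y xy.
  have fy0 := fnz y y0.
  have e' : (x + y) / (x - y) = (x / y + 1) / (x / y - 1).
    field. by rewrite y0 mulN1r subr_eq0.
  move: e; rewrite e' fT //.
  have -> : (f x + f y) / (f x - f y) = (f x / f y + 1) / (f x / f y - 1).
    field. by rewrite fy0 mulN1r subr_eq0.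
  apply: Tinj.
    by rewrite -f1; apply/negP => /eqP /inj /eqP; apply/negP.
  by apply/negP => /eqP e2; move: ne; rewrite -(divfK fy0 (f x)) e2 mul1r eqxx.
have fmul : forall x y, f (x * y) = f x * f y.
  move=> x y; have fi : f y^-1 = (f y)^-1 by rewrite -[y^-1]mul1r fdiv f1 mul1r.
  by rewrite -{1}[y]invrK fdiv fi invrK.
have fexp : forall x n, f (x ^+ n) = f x ^+ n.
  by move=> x; elim=> [|n IH]; rewrite ?expr0 ?f1 // !exprS fmul IH.
set q := (p ^ l)%N.
have q0 : (0 < q)%N by rewrite expn_gt0 prime_gt0.
have rootc : forall r, (r \in codom f) = (r ^+ q == r).
  move=> r; apply/idP/idP.
    by move=> /codomP [x ->]; rewrite -fexp /q -cardF expf_card.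
  move=> /eqP rq; apply/negPn/negP => rn.
  set P : {poly K} := 'X^q - 'X.
  have sP : size P = q.+1.
    rewrite /P size_polyDl size_polyXn // size_polyN size_polyX ltnS //.
    by apply: ltnW.
  have P0 : P != 0 by rewrite -size_poly_gt0 sP.
  have := max_poly_roots P0 (rs := r :: codom f).
  rewrite sP /= size_codom cardF ltnn rn.
  have -> : uniq (codom f) by rewrite codomE (map_inj_uniq inj) enum_uniq.
  have -> : root P r by rewrite /root /P !hornerE rq subrr.
  have -> : all (root P) (codom f).
    apply/allP => y yc; move: (yc); rewrite -/q.
    have : y ^+ q == y by move: yc => /codomP [x ->]; rewrite -fexp /q -cardF expf_card.
    by move=> /eqP yq _; rewrite /root /P !hornerE yq subrr.
  by move=> /(_ isT isT).
have uc : uniq (codom f) by rewrite codomE (map_inj_uniq inj) enum_uniq.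
split => //.
- split.
  + by rewrite -f1 codom_f.
  + move=> u v; rewrite !rootc => /eqP uq /eqP vq.
    by rewrite /q frobB // -/q uq vq.
  + move=> u v /codomP [x ->] /codomP [y ->]; rewrite -fdiv; exact: codom_f.
- by rewrite size_codom.
- move=> s us ss cs.
  have sub : {subset s <= codom f}.
    by move=> r rs; rewrite rootc -ss (@closed_fix _ _ us cs r rs) ?eqxx.
  have hs : (size (codom f) <= size s)%N by rewrite size_codom cardF ss.
  by case: (uniq_min_size us sub hs).
Qed.
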